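(* Let $r_0>0$, $R_c>0$, $D>0$. Let $H\subset[0,D]$ be a finite set (helper positions) and $V\subset\mathbb{R}$ a finite set (VoI positions), with $H\cap V=\emptyset$. Call a finite set of pairs $\{(h_1,v_1),\dots,(h_n,v_n)\}$ a \emph{feasible schedule} if the $h_j\in H$ are pairwise distinct, the $v_j\in V$ are pairwise distinct, $|h_j-v_j|\le r_0$ for every $j$, and $|h_i-h_j|\ge R_c$ for all $i\neq j$. Define the greedy schedule as follows. Let $g_1$ be the smallest $x\in H$ such that $[x-r_0,x+r_0]\cap V\neq\emptyset$, and let $u_1$ be the smallest element of $[g_1-r_0,g_1+r_0]\cap V$. Having defined $(g_1,u_1),\dots,(g_k,u_k)$, let $g_{k+1}$ be the smallest $x\in H$ with $x\ge g_k+R_c$ such that $[x-r_0,x+r_0]$ contains an element of $V\setminus\{u_1,\dots,u_k\}$, and let $u_{k+1}$ be the smallest element of $([g_{k+1}-r_0,g_{k+1}+r_0]\cap V)\setminus\{u_1,\dots,u_k\}$. Stop when no such $x$ exists (or when no $g_1$ exists, in which case the greedy schedule is empty). Then the greedy schedule $\{(g_1,u_1),\dots,(g_N,u_N)\}$ is a feasible schedule, and every feasible schedule has at most $N$ pairs.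
   Context: This models a stretch of road (a line) between infrastructure points: ''helpers'' are vehicles that may transmit, VoIs (vehicles of interest) are receivers, $r_0$ is the vehicle radio range and $R_c$ is the carrier-sensing range, so simultaneously transmitting helpers must be at mutual distance at least $R_c$, each transmitter sends to one VoI within distance $r_0$, and each VoI receives from at most one helper. *)

(* Defs.v *)
From Stdlib Require Import Reals Lra List Bool.
Import ListNotations.
Open Scope R_scope.

Definition Rleb (a b : R) : bool := if Rle_dec a b then true else false.
Definition Rinb (x : R) (l : list R) : bool := if in_dec Req_EM_T x l then true else false.

Fixpoint minl (l : list R) : option R :=
  match l with
  | [] => None
  | x :: t => match minl t with
              | None => Some x
              | Some m => if Rleb x m then Some x else Some m
              end
  end.

Definition avail (r0 : R) (V used : list R) (x : R) : list R :=
  filter (fun v => negb (Rinb v used) && Rleb (x - r0) v && Rleb v (x + r0)) V.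

Definition candidates (r0 Rc : R) (H V used : list R) (last : option R) : list R :=
  filter (fun x => match last with
                   | None => true
                   | Some g => Rleb (g + Rc) x
                   end
                   && negb (match avail r0 V used x with [] => true | _ => false end)) H.

(* The greedy schedule; [fuel] bounds the number of steps.  Since successive
   greedy helpers strictly increase (Rc > 0) and lie in H, fuel = length H
   steps suffice for the process to have stopped. *)
Fixpoint greedy_aux (fuel : nat) (r0 Rc : R) (H V used : list R) (last : option R)
  : list (R * R) :=
  match fuel with
  | O => []
  | S f =>
    match minl (candidates r0 Rc H V used last) with
    | None => []
    | Some g =>
      match minl (avail r0 V used g) with
      | None => []
      | Some u => (g, u) :: greedy_aux f r0 Rc H V (used ++ [u]) (Some g)
      end
    end
  end.

Definition greedy (r0 Rc : R) (H V : list R) : list (R * R) :=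
  greedy_aux (length H) r0 Rc H V [] None.

Definition feasible (r0 Rc : R) (H V : list R) (S : list (R * R)) : Prop :=
  NoDup (map fst S) /\
  NoDup (map snd S) /\
  (forall p, In p S -> In (fst p) H /\ In (snd p) V /\ Rabs (fst p - snd p) <= r0) /\
  (forall p q, In p S -> In q S -> p <> q -> Rabs (fst p - fst q) >= Rc).

(* Main.v *)
Require Import Defs.
From Stdlib Require Import Reals List Lra Lia Bool.
Import ListNotations.
Open Scope R_scope.

Lemma Rleb_true a b : Rleb a b = true <-> a <= b.
Proof. unfold Rleb; destruct (Rle_dec a b); split; intros; auto; try discriminate; contradiction. Qed.

Lemma Rinb_true x l : Rinb x l = true <-> In x l.
Proof. unfold Rinb; destruct (in_dec Req_EM_T x l); split; intros; auto; try discriminate; contradiction. Qed.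

Lemma Rinb_false x l : Rinb x l = false <-> ~ In x l.
Proof. unfold Rinb; destruct (in_dec Req_EM_T x l); split; intros; auto; try discriminate; contradiction. Qed.

Lemma minl_spec l m : minl l = Some m -> In m l /\ forall x, In x l -> m <= x.
Proof.
  revert m; induction l as [|a l IH]; intros m E; simpl in E; [discriminate|].
  destruct (minl l) as [r|] eqn:E1.
  - destruct (IH r eq_refl) as [Hr Hmin].
    destruct (Rleb a r) eqn:E2; inversion E; subst; clear E.
    + apply Rleb_true in E2. split; [left; auto|]. intros x [Hx|Hx]; [subst; lra|].
      specialize (Hmin x Hx); lra.
    + split; [right; auto|]. intros x [Hx|Hx]; [|auto].
      subst. unfold Rleb in E2. destruct (Rle_dec x m); [discriminate|lra].
  - inversion E; subst. split; [left; auto|]. intros x [Hx|Hx]; [subst; lra|].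
    destruct l; [contradiction|]. simpl in E1. destruct (minl l); try destruct (Rleb _ _); discriminate.
Qed.

Lemma minl_none l : minl l = None -> l = [].
Proof. destruct l; simpl; auto; destruct (minl l); try destruct (Rleb _ _); discriminate. Qed.

Lemma minl_some l x : In x l -> exists m, minl l = Some m.
Proof. intros H; destruct (minl l) eqn:E; eauto. apply minl_none in E; subst; contradiction. Qed.

Lemma Rabs_le_iff x r : Rabs x <= r <-> - r <= x <= r.
Proof. unfold Rabs; destruct (Rcase_abs x); split; intros; lra. Qed.

Definition lastok (last : option R) (Rc x : R) : Prop :=
  match last with None => True | Some g => g + Rc <= x end.

Lemma avail_in r0 V used x v :
  In v (avail r0 V used x) <-> In v V /\ ~ In v used /\ x - r0 <= v /\ v <= x + r0.
Proof.
  unfold avail. rewrite filter_In, !andb_true_iff, negb_true_iff, Rinb_false, !Rleb_true.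
  tauto.
Qed.

Lemma cand_in r0 Rc H V used last x :
  In x (candidates r0 Rc H V used last) <->
  In x H /\ lastok last Rc x /\ avail r0 V used x <> [].
Proof.
  unfold candidates. rewrite filter_In, andb_true_iff.
  destruct last as [g|]; simpl; [rewrite Rleb_true|];
  destruct (avail r0 V used x); simpl; split; intros; intuition; try discriminate; congruence.
Qed.

Definition repl (a b : R) (x : R) := if Req_EM_T x a then b else x.
Definition fixpair (u v : R) (q : R * R) := (fst q, repl u v (snd q)).

Lemma nodup_repl a b l : NoDup l -> ~ In b l -> NoDup (map (repl a b) l).
Proof.
  induction l as [|x l IH]; intros N Hb; simpl; [constructor|].
  inversion N; subst. constructor.
  - rewrite in_map_iff. intros [y [Ey Hy]]. unfold repl in Ey.
    destruct (Req_EM_T y a) as [e1|e1]; destruct (Req_EM_T x a) as [e2|e2].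
    + apply H1; rewrite e2, <- e1; auto.
    + apply Hb; left; auto.
    + apply Hb; right; rewrite <- Ey; auto.
    + apply H1; rewrite <- Ey; auto.
  - apply IH; auto. intro; apply Hb; right; auto.
Qed.

Lemma map_fst_fix u v L : map fst (map (fixpair u v) L) = map fst L.
Proof. induction L; simpl; f_equal; auto. Qed.
Lemma map_snd_fix u v L : map snd (map (fixpair u v) L) = map (repl u v) (map snd L).
Proof. induction L; simpl; f_equal; auto. Qed.

Definition adm r0 Rc (H V used : list R) (last : option R) (S : list (R * R)) : Prop :=
  NoDup (map fst S) /\ NoDup (map snd S) /\
  (forall p, In p S -> In (fst p) H /\ In (snd p) V /\ Rabs (fst p - snd p) <= r0 /\
      ~ In (snd p) used /\ lastok last Rc (fst p)) /\
  (forall p q, In p S -> In q S -> fst p < fst q -> fst p + Rc <= fst q).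

Lemma exists_min (S : list (R*R)) : S <> [] -> exists p, In p S /\ forall q, In q S -> fst p <= fst q.
Proof.
  induction S as [|a S IH]; intros N; [contradiction|].
  destruct S as [|b S'].
  - exists a; split; [left; auto|]. intros q [Hq|Hq]; [subst; lra|contradiction].
  - destruct (IH ltac:(discriminate)) as [p [Hp Hm]].
    destruct (Rle_dec (fst a) (fst p)).
    + exists a; split; [left; auto|]. intros q [Hq|Hq]; [subst; lra|]. specialize (Hm q Hq); lra.
    + exists p; split; [right; auto|]. intros q [Hq|Hq]; [subst; lra|auto].
Qed.

Lemma greedy_opt r0 Rc H V (Hr0 : 0 < r0) (HRc : 0 < Rc) :
  forall fuel used last S, adm r0 Rc H V used last S -> (length S <= fuel)%nat ->
  (length S <= length (greedy_aux fuel r0 Rc H V used last))%nat.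
Proof.
  induction fuel as [|f IHf]; intros used last S Hadm Hlen; [simpl; lia|].
  destruct S as [|p0 S0]; [simpl; lia|].
  destruct (exists_min (p0::S0) ltac:(discriminate)) as [[h v] [Hp Hmin]].
  destruct Hadm as (Hnf & Hns & Hpr & Hpw).
  destruct (Hpr _ Hp) as (HhH & HvV & Hhv & Hvu & Hhl). simpl in HhH, HvV, Hhv, Hvu, Hhl.
  apply Rabs_le_iff in Hhv.
  assert (Hav : In v (avail r0 V used h)) by (apply avail_in; repeat split; auto; lra).
  assert (Hhc : In h (candidates r0 Rc H V used last)).
  { apply cand_in; repeat split; auto. intro E; rewrite E in Hav; contradiction. }
  destruct (minl_some _ _ Hhc) as [g Hg]. destruct (minl_spec _ _ Hg) as [Hgc Hgmin].
  pose proof (Hgmin h Hhc) as Hgh.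
  apply cand_in in Hgc as (HgH & Hgl & Hgav).
  destruct (minl (avail r0 V used g)) as [u|] eqn:Eu;
    [| apply minl_none in Eu; contradiction].
  cbn [greedy_aux]. rewrite Hg, Eu. cbn [length].
  destruct (minl_spec _ _ Eu) as [Hu Humin]. apply avail_in in Hu as (HuV & Huu & Hu1 & Hu2).
  assert (Huv : u <= v).
  { destruct (Rle_dec v (g + r0)); [|lra]. apply Humin, avail_in; repeat split; auto; lra. }
  destruct (in_split _ _ Hp) as (l1 & l2 & Hsplit).
  set (L := l1 ++ l2).
  assert (HL : forall q, In q L -> In q (p0 :: S0)).
  { intros q Hq. rewrite Hsplit. unfold L in Hq. rewrite in_app_iff in *. simpl. tauto. }
  assert (Hlen2 : length S0 = length L).
  { apply (f_equal (@length _)) in Hsplit. unfold L. rewrite app_length in *. simpl in *. lia. }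
  rewrite Hsplit in Hnf, Hns. rewrite map_app in Hnf, Hns. simpl in Hnf, Hns.
  pose proof (NoDup_remove_1 _ _ _ Hnf) as Nf. pose proof (NoDup_remove_2 _ _ _ Hnf) as Nh.
  pose proof (NoDup_remove_1 _ _ _ Hns) as Ns. pose proof (NoDup_remove_2 _ _ _ Hns) as Nv.
  rewrite <- map_app in Nf, Nh, Ns, Nv. fold L in Nf, Nh, Ns, Nv.
  assert (Hgt : forall q, In q L -> h + Rc <= fst q).
  { intros q Hq. assert (fst q <> h). { intro E; apply Nh; rewrite <- E; apply in_map; auto. }
    specialize (Hmin q (HL q Hq)). simpl in Hmin.
    apply (Hpw (h,v) q Hp (HL q Hq)). simpl. lra. }
  assert (HS' : adm r0 Rc H V (used ++ [u]) (Some g) (map (fixpair u v) L)).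
  { split; [|split; [|split]].
    - rewrite map_fst_fix; auto.
    - rewrite map_snd_fix. apply nodup_repl; auto.
    - intros q' Hq'. apply in_map_iff in Hq' as [q [Eq Hq]]. subst q'.
      destruct (Hpr q (HL q Hq)) as (A1 & A2 & A3 & A4 & A5).
      pose proof (Hgt q Hq) as Hq1. apply Rabs_le_iff in A3.
      unfold fixpair, repl; simpl. destruct (Req_EM_T (snd q) u) as [E|E].
      + repeat split; auto.
        * apply Rabs_le_iff; lra.
        * rewrite in_app_iff. intros [X|[X|X]]; auto. apply Nv. rewrite <- X, <- E. apply in_map; auto.
        * lra.
      + repeat split; auto.
        * apply Rabs_le_iff; lra.
        * rewrite in_app_iff. intros [X|[X|X]]; auto.
        * lra.
    - intros p' q' Hp' Hq'. apply in_map_iff in Hp' as [p1 [E1 Hp1]].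
      apply in_map_iff in Hq' as [q1 [E2 Hq1]]. subst. unfold fixpair; simpl.
      apply Hpw; apply HL; auto. }
  pose proof (IHf _ _ _ HS') as IH. rewrite map_length in IH.
  specialize (IH ltac:(simpl in Hlen; lia)). simpl. lia.
Qed.

Lemma greedy_feas r0 Rc H V (Hr0 : 0 < r0) (HRc : 0 < Rc) :
  forall fuel used last,
  NoDup (map fst (greedy_aux fuel r0 Rc H V used last)) /\
  NoDup (map snd (greedy_aux fuel r0 Rc H V used last)) /\
  (forall p, In p (greedy_aux fuel r0 Rc H V used last) ->
     In (fst p) H /\ In (snd p) V /\ Rabs (fst p - snd p) <= r0 /\
     ~ In (snd p) used /\ lastok last Rc (fst p)) /\
  (forall p q, In p (greedy_aux fuel r0 Rc H V used last) ->
     In q (greedy_aux fuel r0 Rc H V used last) -> p <> q -> Rabs (fst p - fst q) >= Rc).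
Proof.
  induction fuel as [|f IHf]; intros used last.
  { simpl. repeat split; try constructor; intros; contradiction. }
  cbn [greedy_aux].
  destruct (minl (candidates r0 Rc H V used last)) as [g|] eqn:Eg;
    [| simpl; repeat split; try constructor; intros; contradiction].
  destruct (minl (avail r0 V used g)) as [u|] eqn:Eu;
    [| simpl; repeat split; try constructor; intros; contradiction].
  destruct (IHf (used ++ [u]) (Some g)) as (N1 & N2 & P & W).
  set (G := greedy_aux f r0 Rc H V (used ++ [u]) (Some g)) in *.
  destruct (minl_spec _ _ Eg) as [Hgc _]. apply cand_in in Hgc as (HgH & Hgl & _).
  destruct (minl_spec _ _ Eu) as [Hu _]. apply avail_in in Hu as (HuV & Huu & Hu1 & Hu2).
  assert (PG : forall p, In p G -> g + Rc <= fst p /\ ~ In (snd p) used /\ snd p <> u).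
  { intros p Hp. destruct (P p Hp) as (_ & _ & _ & A4 & A5). simpl in A5.
    rewrite in_app_iff in A4. repeat split; auto. intro E; apply A4; right; left; auto. }
  split; [|split; [|split]].
  - simpl. constructor; auto. rewrite in_map_iff. intros [p [E Hp]].
    destruct (PG p Hp) as [X _]. lra.
  - simpl. constructor; auto. rewrite in_map_iff. intros [p [E Hp]].
    destruct (PG p Hp) as (_ & _ & X). contradiction.
  - intros p [Hp|Hp].
    + subst p; simpl. repeat split; auto. apply Rabs_le_iff; lra.
    + destruct (P p Hp) as (A1 & A2 & A3 & _ & _). destruct (PG p Hp) as (B1 & B2 & _).
      repeat split; auto. destruct last as [g0|]; simpl in *; auto; lra.
  - intros p q [Hp|Hp] [Hq|Hq] Hne.
    + subst; contradiction.
    + subst p; simpl. destruct (PG q Hq) as [X _].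
      unfold Rabs; destruct (Rcase_abs (g - fst q)); lra.
    + subst q; simpl. destruct (PG p Hp) as [X _].
      unfold Rabs; destruct (Rcase_abs (fst p - g)); lra.
    + apply W; auto.
Qed.

Theorem theorem2 (r0 Rc D : R) (H V : list R)
  (Hr0 : 0 < r0) (HRc : 0 < Rc) (HD : 0 < D)
  (HnodupH : NoDup H) (HnodupV : NoDup V)
  (HinD : forall x, In x H -> 0 <= x <= D)
  (Hdisj : forall x, In x H -> ~ In x V) :
  feasible r0 Rc H V (greedy r0 Rc H V) /\
  (forall S, feasible r0 Rc H V S -> (length S <= length (greedy r0 Rc H V))%nat).
Proof.
  split.
  - destruct (greedy_feas r0 Rc H V Hr0 HRc (length H) [] None) as (A & B & C & E).
    unfold feasible, greedy. split; [auto|split; [auto|split; [|auto]]].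
    intros p Hp; destruct (C p Hp) as (X1 & X2 & X3 & _); auto.
  - intros S (N1 & N2 & P & W). unfold greedy. apply greedy_opt; auto.
    + split; [auto|split; [auto|split]].
      * intros p Hp; destruct (P p Hp) as (X1 & X2 & X3); repeat split; auto.
      * intros p q Hp Hq Hlt. assert (p <> q) by (intro; subst; lra).
        specialize (W p q Hp Hq H0). unfold Rabs in W; destruct (Rcase_abs (fst p - fst q)); lra.
    + rewrite <- (map_length fst S). apply NoDup_incl_length; auto.
      intros x Hx. apply in_map_iff in Hx as [p [E Hp]]. subst. apply (P p Hp).
Qed.
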